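(* Let $C\subseteq\mathbb{F}_2^n$ be a linear code, let $0\le p\le1$, and let $t=\log_2(1+p)$. Then \[ \log_2 \mathbb{E}_{S \sim p}\big(2^{|S| - r_C(S)}\big) ~\le~ \mathbb{E}_{T \sim t}\big(|T| - r_C(T)\big). \] Moreover, equality holds if $C$ is a subcube, i.e. $C=\{x\in\mathbb{F}_2^n: x_i=0 \text{ for all } i\notin K\}$ for some $K\subseteq[n]$.
   Context: Fix a generating matrix of $C$ (a matrix over $\mathbb{F}_2$ whose rows span $C$, with columns indexed by $[n]$). For $S\subseteq[n]$, $r_C(S)$ is the rank over $\mathbb{F}_2$ of the set of columns indexed by $S$ (the rank function of the binary matroid on $[n]$ defined by the generating matrix; it does not depend on the choice of generating matrix). For $0\le\lambda\le1$, $S\sim\lambda$ denotes a random subset of $[n]$ containing each element independently with probability $\lambda$. *)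

(* Defs.v *)
From mathcomp Require Import all_boot all_order all_algebra.
From mathcomp Require Import reals exp.
Set Implicit Arguments. Unset Strict Implicit. Unset Printing Implicit Defensive.
Import Order.TTheory GRing.Theory Num.Theory.
Local Open Scope ring_scope.

Definition log2 (R : realType) (x : R) : R := ln x / ln 2.

(* r_C(S): rank over F_2 of the columns of the generating matrix G indexed by S,
   i.e. rank of the submatrix consisting exactly of the columns j in S. *)
Definition rkC (k n : nat) (G : 'M['F_2]_(k, n)) (S : {set 'I_n}) : nat :=
  \rank (colsub (fun j : 'I_#|S| => enum_val j) G).

Definition Erand (R : realType) (n : nat) (lam : R) (f : {set 'I_n} -> R) : R :=
  \sum_(S : {set 'I_n}) lam ^+ #|S| * (1 - lam) ^+ (n - #|S|) * f S.

(* C is the subcube {x : x_i = 0 for all i notin K}; C is the row space of G *)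
Definition is_subcube (k n : nat) (G : 'M['F_2]_(k, n)) (K : {set 'I_n}) : Prop :=
  forall x : 'rV['F_2]_n, (x <= G)%MS <-> (forall i : 'I_n, i \notin K -> x 0 i = 0).

(* Main.v *)
Require Import Defs.
From mathcomp Require Import all_boot all_order all_algebra.
From mathcomp Require Import reals exp.
From mathcomp Require Import interval_inference sequences convex.
From mathcomp Require Import ring lra zify.
Import Order.TTheory GRing.Theory Num.Theory.
Local Open Scope ring_scope.

Module RkM.

Section Rk.
Variables (k n : nat) (G : 'M['F_2]_(k, n)).
Let B := G^T.

Lemma rkC_rowsub (S : {set 'I_n}) :
  rkC G S = \rank (rowsub (fun j : 'I_#|S| => enum_val j) B).
Proof. by rewrite /rkC -mxrank_tr trmx_mxsub. Qed.

Lemma row_in_sub (S : {set 'I_n}) j : j \in S ->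
  (row j B <= rowsub (fun i : 'I_#|S| => enum_val i) B)%MS.
Proof.
move=> jS; rewrite -(enum_rankK_in jS jS) -row_rowsub; exact: row_sub.
Qed.

Lemma rkC_mono (S : {set 'I_n}) e : (rkC G S <= rkC G (e |: S))%N.
Proof.
rewrite !rkC_rowsub; apply: mxrankS; apply/row_subP => i.
rewrite row_rowsub; apply: row_in_sub.
by rewrite in_setU1 (enum_valP i) orbT.
Qed.

Lemma rkC_le1 (S : {set 'I_n}) e : (rkC G (e |: S) <= (rkC G S).+1)%N.
Proof.
rewrite !rkC_rowsub.
apply: (@leq_trans (\rank (rowsub (fun j : 'I_#|S| => enum_val j) B + row e B)%MS)).
  apply: mxrankS; apply/row_subP => i; rewrite row_rowsub.
  have := enum_valP i; rewrite in_setU1 => /orP[/eqP->|iS].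
    exact: addsmxSr.
  apply: submx_trans (addsmxSl _ _); exact: row_in_sub.
apply: leq_trans (leq_of_leqif (mxrank_adds_leqif _ _)) _.
by rewrite -[X in (_ <= X)%N]addn1 leq_add2l rank_leq_row.
Qed.

Lemma rkC_le (S : {set 'I_n}) : (rkC G S <= #|S|)%N.
Proof. exact: rank_leq_col. Qed.

Lemma rowsubBv m (f : 'I_m -> 'I_n) (y : 'rV['F_2]_k) i :
  (rowsub f B *m y^T) i 0 = (y *m G) 0 (f i).
Proof. by rewrite !mxE; apply: eq_bigr => l _; rewrite !mxE mulrC. Qed.

Lemma col0_notK K e : is_subcube G K -> e \notin K -> row e B = 0.
Proof.
move=> hK eK; apply/matrixP => i j; rewrite !mxE.
have /hK h := row_sub j G.
by have := h e eK; rewrite mxE.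
Qed.

Lemma rkC_notK K e (T : {set 'I_n}) : is_subcube G K -> e \notin K ->
  rkC G (e |: T) = rkC G T.
Proof.
move=> hK eK; apply/eqP; rewrite eqn_leq rkC_mono andbT.
rewrite !rkC_rowsub; apply: mxrankS; apply/row_subP => i; rewrite row_rowsub.
have := enum_valP i; rewrite in_setU1 => /orP[/eqP->|iS].
  by rewrite (@col0_notK K e hK eK) sub0mx.
exact: row_in_sub.
Qed.

Lemma rkC_K K e (T : {set 'I_n}) : is_subcube G K -> e \in K -> e \notin T ->
  rkC G (e |: T) = (rkC G T).+1.
Proof.
move=> hK eK eT; apply/eqP; rewrite eqn_leq rkC_le1 /=.
have : ((delta_mx 0 e : 'rV['F_2]_n) <= G)%MS.
  apply: (proj2 (hK _)) => i iK; rewrite mxE /=; case: eqP => // ie.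
  by move: iK; rewrite ie eK.
case/submxP => y hy.
set M := rowsub (fun j : 'I_#|T| => enum_val j) B.
have Mv : M *m y^T = 0.
  apply/matrixP => i j; rewrite ord1 rowsubBv -hy !mxE /=.
  case: eqP => // he; move: (enum_valP i); rewrite he; by rewrite (negPf eT).
have eM : ~~ (row e B <= M)%MS.
  apply/negP => /submxP[z hz].
  have : (row e B *m y^T) 0 0 = 1.
    by rewrite rowEsub rowsubBv -hy !mxE !eqxx.
  by rewrite hz -mulmxA Mv mulmx0 mxE.
rewrite !rkC_rowsub -/M.
apply: (@leq_trans (\rank (M + row e B)%MS)).
  have : (M < M + row e B)%MS.
    rewrite ltmxE addsmxSl /=; apply: contra eM => h.
    exact: submx_trans (addsmxSr _ _) h.
  by rewrite ltmxErank => /andP[_].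
apply: mxrankS; rewrite addsmx_sub; apply/andP; split.
  apply/row_subP => i; rewrite row_rowsub; apply: row_in_sub.
  by rewrite in_setU1 (enum_valP i) orbT.
by apply: row_in_sub; rewrite setU11.
Qed.
End Rk.

End RkM.
Import RkM.

Module AnM.

Section An.
Variable R : realType.

Lemma conc_ln (l a b : R) : 0 < a -> 0 < b -> 0 <= l -> l <= 1 ->
  l * ln a + (1 - l) * ln b <= ln (l * a + (1 - l) * b).
Proof.
move=> a0 b0 l0 l1.
have := @concave_ln R (Itv01 l0 l1) a b a0 b0.
by rewrite !convRE.
Qed.

Lemma amgm (l w : R) : 0 <= l -> l <= 1 -> 0 < w ->
  expR (l * ln w) <= l * w + (1 - l).
Proof.
move=> l0 l1 w0.
have := @conc_ln l w 1 w0 ltr01 l0 l1; rewrite ln1 mulr0 addr0 mulr1.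
have pos : 0 < l * w + (1 - l).
  have [->|lgt0] := eqVneq l 0; first by rewrite mul0r add0r subr0.
  by apply: ltr_pwDl; [rewrite mulr_gt0 // lt_neqAle eq_sym lgt0 | rewrite subr_ge0].
move=> H; apply: (le_trans (y := expR (ln (l * w + (1 - l))))).
  by rewrite ler_expR.
by rewrite lnK // posrE.
Qed.
End An.

Section Key.
Variable R : realType.

Lemma ln2_gt0 : 0 < ln (2 : R).
Proof. by apply: ln_gt0; rewrite ltr1n. Qed.

Lemma key (p X Y al0 : R) : 0 <= p -> p <= 1 -> 0 < X -> X <= Y -> Y <= 2 * X ->
  al0 = ln (1 + p) / ln 2 ->
  ln ((1 - p) * X + p * Y) <= (1 - al0) * ln X + al0 * ln Y.
Proof.
move=> p0 p1 X0 XY YX ->; set al := ln (1 + p) / ln 2.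
have l2 := @ln2_gt0.
have p1pos : 0 < 1 + p by rewrite ltr_pwDl.
have hal0 : 0 <= al by rewrite divr_ge0 ?ln_ge0 ?ler_wpDr // ltW.
have hal1 : al <= 1.
  rewrite ler_pdivrMr // mul1r ler_ln ?posrE //; first by rewrite lerD2l.
set m := Y / X.
have Ym : Y = m * X by rewrite /m mulfVK // gt_eqF.
have m1 : 1 <= m by rewrite /m ler_pdivlMr // mul1r.
have m2 : m <= 2 by rewrite /m ler_pdivrMr.
have m0 : 0 < m by apply: lt_le_trans m1.
set a := m - 1.
have a0 : 0 <= a by rewrite subr_ge0.
have a1 : 0 <= 1 - a by rewrite /a opprB addrA subr_ge0 (_ : 1 + 1 = 2) //.
set E := expR (- (al * ln m)).
have hA : expR (al * ln (2 / m)) = (1 + p) * E.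
  rewrite ln_div ?posrE // mulrBr expRD; congr (_ * _).
  by rewrite /al mulfVK ?gt_eqF // lnK // posrE.
have hB : expR (al * ln (1 / m)) = E by rewrite div1r lnV ?posrE // mulrN.
have A : (1 + p) * E <= al * (2 / m) + (1 - al).
  by rewrite -hA; apply: amgm => //; rewrite divr_gt0.
have B : E <= al * (1 / m) + (1 - al).
  by rewrite -hB; apply: amgm => //; rewrite divr_gt0.
have C : (1 + a * p) * E <= 1.
  have e1 : (1 + a * p) * E = a * ((1 + p) * E) + (1 - a) * E by ring.
  have e2 : a * (al * (2 / m) + (1 - al)) + (1 - a) * (al * (1 / m) + (1 - al)) = 1.
    rewrite /a; field; by rewrite gt_eqF.
  rewrite e1; apply: le_trans (_ : _ <= a * (al * (2 / m) + (1 - al)) + (1 - a) * (al * (1 / m) + (1 - al))) _; last by rewrite e2.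
  by apply: lerD; apply: ler_wpM2l.
have D : 1 + a * p <= expR (al * ln m).
  move: C; rewrite /E expRN -ler_pdivlMr ?invr_gt0 ?expR_gt0 //.
  by rewrite invrK mul1r.
have ap0 : 0 < 1 + a * p by rewrite ltr_pwDl // mulr_ge0.
have D' : ln (1 + a * p) <= al * ln m.
  by rewrite -[X in _ <= X]expRK ler_ln ?posrE ?expR_gt0.
have -> : (1 - p) * X + p * Y = X * (1 + a * p) by rewrite Ym /a; ring.
have -> : (1 - al) * ln X + al * ln Y = ln X + al * ln m.
  by rewrite Ym lnM ?posrE //; ring.
by rewrite lnM ?posrE // lerD2l.
Qed.
End Key.

End AnM.
Import AnM.

Module CombM.
Local Set Implicit Arguments. Local Unset Strict Implicit.

Section Comb.
Variables (R : realType) (I : finType).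

Definition W (q : R) (U A : {set I}) (f : {set I} -> R) : R :=
  \sum_(S : {set I} | S \subset U) q ^+ #|S| * (1 - q) ^+ (#|U| - #|S|) * f (A :|: S).

Lemma sum_split e (U : {set I}) (F : {set I} -> R) : e \in U ->
  \sum_(S : {set I} | S \subset U) F S = \sum_(S : {set I} | S \subset U :\ e) (F S + F (e |: S)).
Proof.
move=> eU; rewrite big_split /= [LHS](bigID (fun S : {set I} => e \in S)) /= addrC.
congr (_ + _).
  by apply: eq_bigl => S; rewrite subsetD1.
rewrite (reindex_onto (fun S => e |: S) (fun S => S :\ e)) /=; last first.
  by move=> S /andP[_ eS]; rewrite setD1K.
apply: eq_bigl => S; rewrite setU11 andbT subUset sub1set eU /=.
rewrite subsetD1; case: (boolP (e \in S)) => eS.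
  rewrite andbF; case: eqP => [h|]; last by rewrite andbF.
  by move: eS; rewrite -h setD11.
by rewrite setU1K // eqxx andbT.
Qed.

Lemma W_split (q : R) (U A : {set I}) (f : {set I} -> R) (e : I) : e \in U ->
  W q U A f = (1 - q) * W q (U :\ e) A f + q * W q (U :\ e) (e |: A) f.
Proof.
move=> eU; rewrite /W (@sum_split e U _ eU) !mulr_sumr -big_split /=.
apply: eq_bigr => S hS.
have [sU eS] := subsetD1P hS.
have cU : #|U| = (#|U :\ e|).+1 by rewrite (cardsD1 e U) eU.
have cS : #|e |: S| = (#|S|).+1 by rewrite cardsU1 eS.
have lS : (#|S| <= #|U :\ e|)%N by apply: subset_leq_card.
rewrite cU cS subSS subSn // -setUA setUCA.
rewrite !exprS; ring.
Qed.

Lemma W0 (q : R) (A : {set I}) (f : {set I} -> R) : W q set0 A f = f A.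
Proof.
rewrite /W (eq_bigl (fun S : {set I} => S == set0)) => [|S]; last by rewrite subset0.
by rewrite big_pred1_eq cards0 !expr0 setU0 !mul1r.
Qed.

Lemma W_ge0 (q : R) (U A : {set I}) (f : {set I} -> R) : 0 <= q -> q <= 1 -> (forall S, 0 <= f S) -> 0 <= W q U A f.
Proof.
move=> q0 q1 f0; apply: sumr_ge0 => S _.
by rewrite !mulr_ge0 ?exprn_ge0 ?subr_ge0.
Qed.

Lemma W_le (q : R) (U A B : {set I}) (f h : {set I} -> R) : 0 <= q -> q <= 1 ->
  (forall S, f (A :|: S) <= h (B :|: S)) -> W q U A f <= W q U B h.
Proof.
move=> q0 q1 fh; apply: ler_sum => S _.
by apply: ler_wpM2l => //; rewrite !mulr_ge0 ?exprn_ge0 ?subr_ge0.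
Qed.

Lemma W_eq (q : R) (U A B : {set I}) (f h : {set I} -> R) :
  (forall S, f (A :|: S) = h (B :|: S)) -> W q U A f = W q U B h.
Proof. by move=> fh; apply: eq_bigr => S _; rewrite fh. Qed.

Lemma W_scale (q : R) (U A : {set I}) (f : {set I} -> R) (c : R) : W q U A (fun S => c * f S) = c * W q U A f.
Proof. rewrite /W mulr_sumr; apply: eq_bigr => S _; ring. Qed.
End Comb.

Lemma W_eq_in (R : realType) (I : finType) (q : R) (U A B : {set I}) (f h : {set I} -> R) :
  (forall S : {set I}, S \subset U -> f (A :|: S) = h (B :|: S)) -> W q U A f = W q U B h.
Proof. by move=> fh; apply: eq_bigr => S hS; rewrite fh. Qed.

End CombM.
Import CombM.

Module MainM.

Section Main.
Variables (R : realType) (I : finType) (g : {set I} -> nat).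
Hypothesis hg : forall S e, (g S <= g (e |: S) <= (g S).+1)%N.
Variable p : R.
Hypotheses (p0 : 0 <= p) (p1 : p <= 1).
Let t := log2 (1 + p).

Lemma t_ge0 : 0 <= t.
Proof. by rewrite /t /log2 divr_ge0 ?ln_ge0 ?ler_wpDr // ltW // ln2_gt0. Qed.

Lemma t_le1 : t <= 1.
Proof.
have l2 := @ln2_gt0 R.
rewrite /t /log2 ler_pdivrMr // mul1r ler_ln ?posrE ?lerD2l //.
by rewrite ltr_pwDl.
Qed.

Lemma key2 X Y : 0 < X -> X <= Y -> Y <= 2 * X ->
  log2 ((1 - p) * X + p * Y) <= (1 - t) * log2 X + t * log2 Y.
Proof.
move=> X0 XY YX; have l2 := @ln2_gt0 R.
have K := @key R p X Y t p0 p1 X0 XY YX erefl.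
by rewrite /log2 !mulrA -mulrDl ler_pM2r ?invr_gt0.
Qed.

Let h := fun S => (2%:R : R) ^+ g S.
Let gr := fun S => ((g S)%:R : R).

Lemma log2_exp k : log2 ((2%:R : R) ^+ k) = k%:R.
Proof.
have l2 := @ln2_gt0 R.
by rewrite /log2 lnXn // mulrnAl divff ?gt_eqF.
Qed.

Lemma ineq_ind m : forall U A : {set I}, #|U| = m ->
  0 < W p U A h /\ log2 (W p U A h) <= W t U A gr.
Proof.
elim: m => [|m IH] U A cU.
  rewrite (cards0_eq cU) !W0 /h /gr log2_exp; split => //.
have [e eU] : exists e, e \in U by apply/card_gt0P; rewrite cU.
have cU' : #|U :\ e| = m by move: cU; rewrite (cardsD1 e U) eU add1n => -[].
have [XP XL] := IH (U :\ e) A cU'.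
have [YP YL] := IH (U :\ e) (e |: A) cU'.
set X := W p (U :\ e) A h in XP XL *.
set Y := W p (U :\ e) (e |: A) h in YP YL *.
have XY : X <= Y.
  apply: W_le => // S; rewrite /h -setUA ler_eXn2l ?ltr1n //.
  by case/andP: (hg (A :|: S) e).
have YX : Y <= 2 * X.
  rewrite /X -W_scale; apply: W_le => // S; rewrite /h -setUA -exprS ler_eXn2l ?ltr1n //.
  by case/andP: (hg (A :|: S) e).
rewrite (W_split _ _ _ eU) [W t U A gr](W_split _ _ _ eU); split.
  apply: lt_le_trans XP _.
  apply: le_trans (_ : (1 - p) * X + p * X <= _); first by rewrite -mulrDl subrK mul1r.
  by rewrite lerD2l ler_wpM2l.
rewrite -/X -/Y; apply: le_trans (key2 _ _ XP XY YX) _.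
apply: lerD; apply: ler_wpM2l => //; [by rewrite subr_ge0 t_le1 | exact: t_ge0].
Qed.

Lemma log2M (a b : R) : 0 < a -> 0 < b -> log2 (a * b) = log2 a + log2 b.
Proof. by move=> a0 b0; rewrite /log2 lnM ?posrE // mulrDl. Qed.

Lemma log2_2 : log2 (2%:R : R) = 1.
Proof. by rewrite /log2 divff // gt_eqF // ln2_gt0. Qed.

Hypothesis hc : forall e : I, (forall T : {set I}, e \notin T -> g (e |: T) = g T) \/
  (forall T : {set I}, e \notin T -> g (e |: T) = (g T).+1).

Lemma eq_ind m : forall U A : {set I}, #|U| = m -> (forall x, x \in A -> x \notin U) ->
  log2 (W p U A h) = W t U A gr.
Proof.
elim: m => [|m IH] U A cU dAU.
  by rewrite (cards0_eq cU) !W0 /h /gr log2_exp.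
have [e eU] : exists e, e \in U by apply/card_gt0P; rewrite cU.
have cU' : #|U :\ e| = m by move: cU; rewrite (cardsD1 e U) eU add1n => -[].
have [XP _] := @ineq_ind m (U :\ e) A cU'.
have dA : forall x, x \in A -> x \notin U :\ e.
  by move=> x xA; rewrite in_setD1 negb_and (negbTE (dAU x xA)) orbT.
have dA' : forall x, x \in e |: A -> x \notin U :\ e.
  move=> x; rewrite in_setU1 => /orP[/eqP->|xA]; first by rewrite setD11.
  exact: dA.
have XL := IH (U :\ e) A cU' dA.
have YL := IH (U :\ e) (e |: A) cU' dA'.
have eA : e \notin A by apply/negP => /dAU; rewrite eU.
rewrite (W_split _ _ _ eU) [W t U A gr](W_split _ _ _ eU) -XL -YL.
set X := W p (U :\ e) A h in XP *.
set Y := W p (U :\ e) (e |: A) h.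
have eS : forall S : {set I}, S \subset U :\ e -> e \notin A :|: S.
  by move=> S /subsetD1P[_ eS]; rewrite in_setU negb_or eA.
case: (hc e) => he.
  have YX : Y = X.
    apply: W_eq_in => S /eS eAS; rewrite /h -setUA he //.
  rewrite YX -mulrDl subrK mul1r -mulrDl subrK mul1r //.
have YX : Y = 2%:R * X.
  rewrite /X -W_scale; apply: W_eq_in => S /eS eAS; rewrite /h -setUA he // exprS //.
have two : (0 : R) < 2%:R by rewrite ltr0n.
have -> : (1 - p) * X + p * Y = (1 + p) * X by rewrite YX; ring.
rewrite YX !log2M // ?log2_2 ?ltr_pwDl //; rewrite /t; ring.
Qed.
End Main.

End MainM.
Import MainM.


Lemma ErandW (R : realType) n (q : R) (f : {set 'I_n} -> R) :
  Erand q f = W q setT set0 f.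
Proof.
rewrite /Erand /W [RHS](eq_bigl xpredT) => [|S]; last by rewrite subsetT.
by apply: eq_bigr => S _; rewrite cardsT card_ord set0U.
Qed.

Theorem proposition1p3 (R : realType) (k n : nat) (G : 'M['F_2]_(k, n)) (p : R) :
  0 <= p -> p <= 1 ->
  let t := log2 (1 + p) in
  log2 (Erand p (fun S => 2%:R ^+ (#|S| - rkC G S)))
    <= Erand t (fun T => (#|T| - rkC G T)%:R)
  /\ ((exists K : {set 'I_n}, is_subcube G K) ->
      log2 (Erand p (fun S => 2%:R ^+ (#|S| - rkC G S)))
        = Erand t (fun T => (#|T| - rkC G T)%:R)).
Proof.
move=> p0 p1 t.
pose g := fun S : {set 'I_n} => (#|S| - rkC G S)%N.
have hg : forall S e, (g S <= g (e |: S) <= (g S).+1)%N.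
  move=> S e; case: (boolP (e \in S)) => eS.
    have -> : e |: S = S by apply/setUidPr; rewrite sub1set.
    by rewrite leqnn leqnSn.
  rewrite /g cardsU1 eS.
  have := @rkC_mono _ _ G S e; have := @rkC_le1 _ _ G S e; have := @rkC_le _ _ G S.
  simpl; lia.
rewrite !ErandW; split.
  exact: (@ineq_ind _ _ g hg p p0 p1 _ setT set0 erefl).2.
case=> K hK.
have hc : forall e : 'I_n, (forall T : {set 'I_n}, e \notin T -> g (e |: T) = g T) \/
  (forall T : {set 'I_n}, e \notin T -> g (e |: T) = (g T).+1).
  move=> e; case: (boolP (e \in K)) => eK; [left|right] => T eT;
    rewrite /g cardsU1 eT.
    rewrite (@rkC_K _ _ G K e T hK eK eT); simpl; lia.
  rewrite (@rkC_notK _ _ G K e T hK eK); have := @rkC_le _ _ G T; simpl; lia.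
exact: (@eq_ind _ _ g hg p p0 p1 hc _ setT set0 erefl (fun x (h : x \in set0) => ltac:(by rewrite inE in h))).
Qed.
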